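(* Let $X$ be a real $n\times p$ matrix ($p<n$) of full rank, let $\sigma>0$, $f\in\mathbb{R}^p$, $z\in\mathbb{R}^n$, and $y=Xf+z$. Let $z=X\bar g+\bar b$ be the unique decomposition with $\bar g\in\mathbb{R}^p$ and $\bar b\in\ker X^\top$, and set $f_n=f+\bar g$. If $\|\bar b\|_\infty<\sigma$, then $(f_n,\bar b)$ is the unique solution of $$\min_{(g,b)\in\mathbb{R}^p\times\mathbb{R}^n}\ \sigma\|y-Xg-b\|_1+\tfrac12\|b\|_2^2.$$
   Context: $f_n$ is the least squares estimator $(X^\top X)^{-1}X^\top y$. *)

(* Defs.v *)
From mathcomp Require Import all_boot all_order all_algebra.
Set Implicit Arguments. Unset Strict Implicit. Unset Printing Implicit Defensive.
Import Order.TTheory GRing.Theory Num.Theory.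
Local Open Scope ring_scope.

Definition norm1 (R : realDomainType) (n : nat) (v : 'cV[R]_n) : R :=
  \sum_(i < n) `|v i 0|.
Definition norm2sq (R : realDomainType) (n : nat) (v : 'cV[R]_n) : R :=
  \sum_(i < n) (v i 0) ^+ 2.
Definition norminf (R : realDomainType) (n : nat) (v : 'cV[R]_n) : R :=
  \big[Num.max/0]_(i < n) `|v i 0|.

Definition objective (R : realFieldType) (n p : nat) (sigma : R)
  (X : 'M[R]_(n, p)) (y : 'cV[R]_n) (g : 'cV[R]_p) (b : 'cV[R]_n) : R :=
  sigma * norm1 (y - X *m g - b) + 2^-1 * norm2sq b.

Definition unique_minimizer (R : realFieldType) (n p : nat) (sigma : R)
  (X : 'M[R]_(n, p)) (y : 'cV[R]_n) (g : 'cV[R]_p) (b : 'cV[R]_n) : Prop :=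
  (forall g' b', objective sigma X y g b <= objective sigma X y g' b') /\
  (forall g' b', objective sigma X y g' b' <= objective sigma X y g b ->
                 g' = g /\ b' = b).

(* Main.v *)
Require Import Defs.
From mathcomp Require Import all_boot all_order all_algebra.
From mathcomp Require Import ring lra.
Import Order.TTheory GRing.Theory Num.Theory.
Local Open Scope ring_scope.

Lemma norminf_ge (R : realDomainType) (n : nat) (v : 'cV[R]_n) (i : 'I_n) :
  `|v i 0| <= norminf v.
Proof. by rewrite /norminf (bigD1 i) //= le_max lexx. Qed.

Theorem proposition4p4 (R : realFieldType) (n p : nat) (X : 'M[R]_(n, p))
  (sigma : R) (f : 'cV[R]_p) (z : 'cV[R]_n) (gbar : 'cV[R]_p) (bbar : 'cV[R]_n) :
  (p < n)%N -> \rank X = p -> 0 < sigma ->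
  z = X *m gbar + bbar -> X^T *m bbar = 0 ->
  norminf bbar < sigma ->
  unique_minimizer sigma X (X *m f + z) (f + gbar) bbar.
Proof.
move=> _ rk sp -> hX hinf.
set g0 := f + gbar.
have hy : X *m f + (X *m gbar + bbar) = X *m g0 + bbar.
  by rewrite /g0 mulmxDr addrA.
rewrite hy.
have obj0 : objective sigma X (X *m g0 + bbar) g0 bbar = 2^-1 * norm2sq bbar.
  rewrite /objective /norm1 (addrC (X *m g0)) addrK subrr big1 ?mulr0 ?add0r //.
  by move=> i _; rewrite mxE normr0.
have orth : forall d : 'cV[R]_p, \sum_(i < n) bbar i 0 * (X *m d) i 0 = 0.
  move=> d.
  have : (bbar^T *m (X *m d)) 0 0 = 0.
    by rewrite mulmxA -[bbar^T *m X]trmxK trmx_mul trmxK hX trmx0 !mul0mx mxE.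
  move=> h; rewrite -[RHS]h mxE; apply: eq_bigr => i _; by rewrite [bbar^T _ _]mxE.
have key : forall g' b',
  objective sigma X (X *m g0 + bbar) g' b' - objective sigma X (X *m g0 + bbar) g0 bbar
  = \sum_(i < n) (sigma * `|(X *m g0 + bbar - X *m g' - b') i 0|
       - bbar i 0 * (X *m g0 + bbar - X *m g' - b') i 0
       + 2^-1 * (b' i 0 - bbar i 0) ^+ 2).
  move=> g' b'.
  rewrite obj0 /objective /norm1 /norm2sq.
  have hr : forall i, (X *m g0 + bbar - X *m g' - b') i 0
      = (X *m (g0 - g')) i 0 + bbar i 0 - b' i 0.
    by move=> i; rewrite mulmxBr (addrAC (X *m g0)); move: (X *m g0 - X *m g') => M; rewrite !mxE.
  have ho := orth (g0 - g').
  have e : \sum_(i < n) bbar i 0 * (X *m g0 + bbar - X *m g' - b') i 0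
        = \sum_(i < n) (bbar i 0 * (bbar i 0 - b' i 0)).
    rewrite -[in RHS](add0r (\sum_(i < n) _)) -{2}ho -big_split /=.
    by apply: eq_bigr => i _; rewrite hr; ring.
  rewrite [RHS](_ : _ = \sum_(i < n) (sigma * `|(X *m g0 + bbar - X *m g' - b') i 0|
       + 2^-1 * (b' i 0 - bbar i 0) ^+ 2)
       - \sum_(i < n) bbar i 0 * (X *m g0 + bbar - X *m g' - b') i 0); last first.
    by rewrite -sumrB; apply: eq_bigr => i _; ring.
  rewrite e -sumrB !mulr_sumr -big_split -sumrB /=.
  by apply: eq_bigr => i _; field.
have termge : forall (g' : 'cV[R]_p) (b' : 'cV[R]_n) (i : 'I_n),
   (sigma - `|bbar i 0|) * `|(X *m g0 + bbar - X *m g' - b') i 0|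
     + 2^-1 * (b' i 0 - bbar i 0) ^+ 2 <=
   sigma * `|(X *m g0 + bbar - X *m g' - b') i 0|
       - bbar i 0 * (X *m g0 + bbar - X *m g' - b') i 0
       + 2^-1 * (b' i 0 - bbar i 0) ^+ 2.
  move=> g' b' i; set r := (X *m g0 + bbar - X *m g' - b') i 0.
  have : bbar i 0 * r <= `|bbar i 0| * `|r|.
    by rewrite -normrM ler_norm.
  lra.
have termpos : forall (g' : 'cV[R]_p) (b' : 'cV[R]_n) (i : 'I_n),
   0 <= (sigma - `|bbar i 0|) * `|(X *m g0 + bbar - X *m g' - b') i 0|
     + 2^-1 * (b' i 0 - bbar i 0) ^+ 2.
  move=> g' b' i; apply: addr_ge0.
    apply: mulr_ge0 => //; rewrite subr_ge0; apply: ltW.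
    exact: le_lt_trans (@norminf_ge _ _ bbar i) hinf.
  by apply: mulr_ge0; rewrite ?invr_ge0 ?sqr_ge0.
split.
  move=> g' b'; rewrite -subr_ge0 key; apply: sumr_ge0 => i _.
  exact: le_trans (termpos g' b' i) (termge g' b' i).
move=> g' b' hle.
have hs : \sum_(i < n) (sigma * `|(X *m g0 + bbar - X *m g' - b') i 0|
       - bbar i 0 * (X *m g0 + bbar - X *m g' - b') i 0
       + 2^-1 * (b' i 0 - bbar i 0) ^+ 2) = 0.
  apply/eqP; rewrite eq_le -key subr_le0 hle /= key.
  apply: sumr_ge0 => i _; exact: le_trans (termpos g' b' i) (termge g' b' i).
have h0 := psumr_eq0P (fun i _ => le_trans (termpos g' b' i) (termge g' b' i)) hs.
have each : forall i, (X *m g0 + bbar - X *m g' - b') i 0 = 0 /\ b' i 0 = bbar i 0.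
  move=> i; have := h0 i isT; have := termge g' b' i.
  have hb : `|bbar i 0| < sigma := le_lt_trans (@norminf_ge _ _ bbar i) hinf.
  set r := (X *m g0 + bbar - X *m g' - b') i 0 => ht hti.
  rewrite hti in ht.
  have hq : 0 <= (b' i 0 - bbar i 0) ^+ 2 by rewrite sqr_ge0.
  have hr0 : 0 <= `|r| by [].
  have hp : 0 <= (sigma - `|bbar i 0|) * `|r|.
    by apply: mulr_ge0 => //; rewrite subr_ge0 ltW.
  have hq0 : (b' i 0 - bbar i 0) ^+ 2 = 0 by lra.
  have hp0 : (sigma - `|bbar i 0|) * `|r| = 0 by lra.
  split.
    move/eqP: hp0; rewrite mulf_eq0 normr_eq0 => /orP [|/eqP //].
    by rewrite subr_eq0 => /eqP e; rewrite e ltxx in hb.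
  by move/eqP: hq0; rewrite sqrf_eq0 subr_eq0 => /eqP.
have hb' : b' = bbar.
  by apply/matrixP => i j; rewrite (ord1 j); case: (each i).
split=> //.
have hXd : X *m (g0 - g') = 0.
  apply/matrixP => i j; rewrite (ord1 j); transitivity (0 : R); last by rewrite mxE.
  case: (each i) => hr _; rewrite -hr hb' mulmxBr (addrAC (X *m g0)) addrK //.
have rf : row_free X^T by rewrite /row_free mxrank_tr rk.
have : (g0 - g')^T *m X^T = 0 *m X^T by rewrite -trmx_mul hXd trmx0 mul0mx.
move/(row_free_inj rf)/(congr1 trmx); rewrite trmxK trmx0 => /eqP.
by rewrite subr_eq0 => /eqP.
Qed.
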